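(* For every point $x$ of the Cayley complex $X$ of $F$ we have $N_{\min}(x)-2\le \mathrm{lev}(x)<4N_{\max}(x)+1$, and moreover $N_{\max}(x)-N_{\min}(x)\le 9$.
   Context: $X$ is the Cayley 2-complex of Thompson's group $F$ with presentation $\langle x_0,x_1\mid [x_0x_1^{-1},x_0^{-1}x_1x_0],[x_0x_1^{-1},x_0^{-2}x_1x_0^2]\rangle$ (relators of lengths 10 and 14), $X^0=F$. For $g\in F$, $N(g)$ is the number of carets in either tree of the reduced tree pair diagram of $g$. For $x\in X$: if $x=g\in X^0$, $N_{\max}(x)=N_{\min}(x)=N(g)$; if $x$ is interior to an edge with endpoints $g,h$, $N_{\max}(x)=\max(N(g),N(h))$, $N_{\min}(x)=\min(N(g),N(h))$; if $x$ is interior to a 2-cell with boundary vertices $g_1,\dots,g_n$, $N_{\max}(x)$ and $N_{\min}(x)$ are the max and min of the $N(g_i)$. Levels: $\mathrm{lev}(g)$ is the word length of $g$ over $\{x_0^{\pm1},x_1^{\pm1}\}$; for $x$ interior to an edge with endpoints $g,h$, $\mathrm{lev}(x)=\frac{\mathrm{lev}(g)+\mathrm{lev}(h)}{2}+\frac14$; for $x$ interior to a 2-cell with boundary vertices $g_1,\dots,g_n$, $\mathrm{lev}(x)=\frac1n\sum_i\mathrm{lev}(g_i)+\frac14+\frac1c$ with $c=4\cdot10\cdot14+1$. *)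

(* Defs.v *)
From mathcomp Require Import all_boot all_algebra.
From Stdlib Require Import ClassicalEpsilon.
Set Implicit Arguments. Unset Strict Implicit. Unset Printing Implicit Defensive.
Import GRing.Theory Num.Theory.

Inductive tree := Leaf | Node of tree & tree.

Fixpoint carets (t : tree) : nat :=
  match t with Leaf => 0 | Node l r => (carets l + carets r).+1 end.

(* leaf addresses, left to right (false = left, true = right) *)
Fixpoint leaves (t : tree) : seq (seq bool) :=
  match t with
  | Leaf => [:: [::]]
  | Node l r => map (cons false) (leaves l) ++ map (cons true) (leaves r)
  end.

Definition stream := nat -> bool.
Definition map_st := stream -> stream.

Definition feq (f g : map_st) : Prop := forall s n, f s n = g s n.

(* index of the leaf of t whose address is a prefix of s, and its depth *)
Fixpoint locate (t : tree) (s : stream) (d : nat) : nat * nat :=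
  match t with
  | Leaf => (0, d)
  | Node l r =>
      if s d then let: (i, d') := locate r s d.+1 in (size (leaves l) + i, d')
      else locate l s d.+1
  end.

(* the map of Cantor space defined by the tree pair diagram (T1, T2):
   the i-th leaf address of the domain tree T1 is replaced by the i-th leaf
   address of the range tree T2 *)
Definition tp_map (T1 T2 : tree) : map_st := fun s =>
  let: (i, d) := locate T1 s 0 in
  let b := nth [::] (leaves T2) i in
  fun n => if n < size b then nth false b n else s (n - size b + d).

Definition tree_pair (T1 T2 : tree) : Prop :=
  size (leaves T1) = size (leaves T2).

Definition exposed (t : tree) (i : nat) : Prop :=
  i.+1 < size (leaves t) /\
  exists a, nth [::] (leaves t) i = rcons a false /\
            nth [::] (leaves t) i.+1 = rcons a true.

Definition reduced (T1 T2 : tree) : Prop :=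
  ~ exists i, exposed T1 i /\ exposed T2 i.

Definition Ncarets (g : map_st) (n : nat) : Prop :=
  exists T1 T2, [/\ tree_pair T1 T2, feq (tp_map T1 T2) g, reduced T1 T2
                 & carets T1 = n].

Definition Ncar (g : map_st) : nat := epsilon (inhabits 0%N) (Ncarets g).

Inductive letter := X0 | X0i | X1 | X1i.
Definition word := seq letter.

(* Cannon-Floyd-Parry x0 : [0,1/2]->[0,1/4], [1/2,3/4]->[1/4,1/2], [3/4,1]->[1/2,1] *)
Definition x0_dom := Node Leaf (Node Leaf Leaf).
Definition x0_rng := Node (Node Leaf Leaf) Leaf.
(* x1 : identity on [0,1/2], and x0 rescaled on [1/2,1] *)
Definition x1_dom := Node Leaf (Node Leaf (Node Leaf Leaf)).
Definition x1_rng := Node Leaf (Node (Node Leaf Leaf) Leaf).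

Definition letter_map (a : letter) : map_st :=
  match a with
  | X0 => tp_map x0_dom x0_rng
  | X0i => tp_map x0_rng x0_dom
  | X1 => tp_map x1_dom x1_rng
  | X1i => tp_map x1_rng x1_dom
  end.

(* group product g h = g o h ; a word a1 ... ak evaluates to a1 o ... o ak *)
Definition eval (w : word) : map_st :=
  foldr (fun a f => fun s => letter_map a (f s)) id w.

(* level of a vertex: word length over {x0^{+-1}, x1^{+-1}} *)
Definition is_word_length (g : map_st) (n : nat) : Prop :=
  (exists w : word, size w = n /\ feq (eval w) g) /\
  (forall w : word, feq (eval w) g -> (n <= size w)%N).

Definition lev (g : map_st) : nat := epsilon (inhabits 0%N) (is_word_length g).

Definition linv (a : letter) : letter :=
  match a with X0 => X0i | X0i => X0 | X1 => X1i | X1i => X1 end.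
Definition winv (w : word) : word := rev (map linv w).
Definition commw (u v : word) : word := winv u ++ winv v ++ u ++ v.

(* [x0 x1^-1, x0^-1 x1 x0] (length 10) and [x0 x1^-1, x0^-2 x1 x0^2] (length 14) *)
Definition rel1 : word := commw [:: X0; X1i] [:: X0i; X1; X0].
Definition rel2 : word := commw [:: X0; X1i] [:: X0i; X0i; X1; X0; X0].
Definition relators : seq word := [:: rel1; rel2].

(* Vertices are the elements eval w; the edges join g and g a (a a generator
   or its inverse); the 2-cell based at g for relator r has boundary vertices
   g * (prefix of r of length i), i = 0 .. |r|-1.  A point of X is described
   by the (open) cell containing it; all quantities below depend only on it. *)
Inductive point :=
  | PVert of word
  | PEdge of word & letter
  | PCell of word & 'I_2.

Definition rel_of (j : 'I_2) : word := nth [::] relators j.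

Definition cell_vertices (w r : word) : seq map_st :=
  [seq eval (w ++ take i r) | i <- iota 0 (size r)].

Definition pt_vertices (x : point) : seq map_st :=
  match x with
  | PVert w => [:: eval w]
  | PEdge w a => [:: eval w; eval (w ++ [:: a])]
  | PCell w j => cell_vertices w (rel_of j)
  end.

Definition Nmax (x : point) : nat := \max_(g <- pt_vertices x) Ncar g.
Definition Nmin (x : point) : nat :=
  \big[minn/Ncar (head id (pt_vertices x))]_(g <- pt_vertices x) Ncar g.

Definition cconst : nat := 4 * 10 * 14 + 1.

Local Open Scope ring_scope.
Definition levp (x : point) : rat :=
  match x with
  | PVert w => (lev (eval w))%:R
  | PEdge w a => ((lev (eval w))%:R + (lev (eval (w ++ [:: a])))%:R) / 2%:R
                 + 1 / 4%:R
  | PCell w j =>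
      (\sum_(g <- cell_vertices w (rel_of j)) (lev g)%:R)
        / (size (rel_of j))%:R + 1 / 4%:R + 1 / cconst%:R
  end.

(* Main.v *)
Require Import Defs.
From mathcomp Require Import all_boot all_algebra zify lra.
From Stdlib Require Import FunctionalExtensionality Classical ClassicalEpsilon.
Import GRing.Theory Num.Theory.
Set Implicit Arguments. Unset Strict Implicit. Unset Printing Implicit Defensive.

Definition app (u : seq bool) (s : stream) : stream :=
  fun n => if n < size u then nth false u n else s (n - size u).

Definition pre_at (d : nat) (u : seq bool) (s : stream) : Prop :=
  forall k, k < size u -> s (d + k) = nth false u k.

Lemma size_leaves T : size (leaves T) = (carets T).+1.
Proof.
elim: T => [//|l IHl r IHr] /=.
by rewrite size_cat !size_map IHl IHr addSn addnS.
Qed.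

Lemma nth_leaves_Node l r i : i < size (leaves (Node l r)) ->
  nth [::] (leaves (Node l r)) i =
  if i < size (leaves l) then false :: nth [::] (leaves l) i
  else true :: nth [::] (leaves r) (i - size (leaves l)).
Proof.
rewrite /= size_cat !size_map => Hs; rewrite nth_cat size_map; case: ifP => Hi.
  by rewrite (nth_map [::]).
by rewrite (nth_map [::]) // ltn_subLR // leqNgt Hi.
Qed.

Lemma locate_uniq T s d i :
  i < size (leaves T) -> pre_at d (nth [::] (leaves T) i) s ->
  locate T s d = (i, d + size (nth [::] (leaves T) i)).
Proof.
elim: T s d i => [|l IHl r IHr] s d i /=.
  by case: i => // _ _; rewrite addn0.
rewrite size_cat !size_map => Hi Hp.
move: Hp; rewrite -/(leaves (Node l r)) nth_leaves_Node ?size_cat ?size_map // => Hp.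
have Hp' : forall u b, pre_at d (b :: u) s -> pre_at d.+1 u s /\ s d = b.
  move=> u b H; split; last by rewrite -[d]addn0; apply: (H 0).
  by move=> k Hk; rewrite addSn -addnS; apply: (H k.+1).
case: ifP Hp => Hil Hp; case: (Hp' _ _ Hp) => Hp2 ->.
  by rewrite (IHl s d.+1 i Hil Hp2) /= addSnnS.
have Hir : i - size (leaves l) < size (leaves r) by rewrite ltn_subLR // leqNgt Hil.
rewrite (IHr s d.+1 _ Hir Hp2) /= addSnnS subnKC //.
by rewrite leqNgt Hil.
Qed.

Lemma locate_spec T s d :
  let: (i, d') := locate T s d in
  [/\ i < size (leaves T), d' = d + size (nth [::] (leaves T) i)
    & pre_at d (nth [::] (leaves T) i) s].
Proof.
elim: T s d => [|l IHl r IHr] s d /=.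
  by split => //; rewrite addn0.
have Hp' : forall u b, s d = b -> pre_at d.+1 u s -> pre_at d (b :: u) s.
  move=> u b Hb H [|k] Hk /=; first by rewrite addn0.
  by rewrite addnS -addSn H.
case Hsd: (s d).
  case E: (locate r s d.+1) (IHr s d.+1) => [i d'] [H1 H2 H3].
  have Hnth : nth [::] (leaves (Node l r)) (size (leaves l) + i) = true :: nth [::] (leaves r) i.
    rewrite nth_leaves_Node; last by rewrite /= size_cat !size_map ltn_add2l.
    by rewrite ltnNge leq_addr /= addKn.
  rewrite -/(leaves (Node l r)) Hnth; split.
  - by rewrite /= size_cat !size_map ltn_add2l.
  - by rewrite H2 /= addSnnS.
  - exact: Hp'.
case E: (locate l s d.+1) (IHl s d.+1) => [i d'] [H1 H2 H3].
have Hnth : nth [::] (leaves (Node l r)) i = false :: nth [::] (leaves l) i.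
  rewrite nth_leaves_Node ?H1 //; by rewrite /= size_cat !size_map ltn_addr.
rewrite -/(leaves (Node l r)) Hnth; split.
- by rewrite /= size_cat !size_map ltn_addr.
- by rewrite H2 /= addSnnS.
- exact: Hp'.
Qed.

Lemma pre_app u s : pre_at 0 u (app u s).
Proof. by move=> k Hk; rewrite /app add0n Hk. Qed.

Lemma app_decomp u s : pre_at 0 u s -> s = app u (fun n => s (n + size u)).
Proof.
move=> H; apply: functional_extensionality => n; rewrite /app.
case: ifP => Hn; first by rewrite -H.
by rewrite subnK // leqNgt Hn.
Qed.

Lemma app_cat u w s : app (u ++ w) s = app u (app w s).
Proof.
apply: functional_extensionality => n; rewrite /app size_cat nth_cat.
case: (ltnP n (size u)) => H1; first by rewrite ltn_addr.
by rewrite ltn_subLR // subnDA.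
Qed.

Lemma app_nil s : app [::] s = s.
Proof. by apply: functional_extensionality => n; rewrite /app subn0. Qed.

Lemma app_inj u w : (forall s, app u s = app w s) -> u = w.
Proof.
wlog Hle : u w / size u <= size w.
  move=> Hw H; case: (leqP (size u) (size w)) => Hs; first exact: Hw Hs H.
  by symmetry; apply: (Hw w u (ltnW Hs)) => s; rewrite H.
move=> H.
have Hsz : size u = size w.
  apply/eqP; rewrite eqn_leq Hle /=; rewrite leqNgt; apply/negP => Hlt.
  have := congr1 (fun f => f (size w)) (H (fun n => n == 0)).
  rewrite /app ltnn subnn /= ifN; last by rewrite -leqNgt ltnW.
  by rewrite subn_eq0 leqNgt Hlt.
apply: (@eq_from_nth _ false) => // k Hk.
have := congr1 (fun f => f k) (H (fun _ => false)).
by rewrite /app Hk -Hsz Hk.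
Qed.

Lemma tp_leaf T1 T2 i s : tree_pair T1 T2 -> i < size (leaves T1) ->
  tp_map T1 T2 (app (nth [::] (leaves T1) i) s) = app (nth [::] (leaves T2) i) s.
Proof.
move=> Htp Hi; rewrite /tp_map (locate_uniq Hi (@pre_app (nth [::] (leaves T1) i) s)) add0n.
apply: functional_extensionality => n; rewrite /app.
case: ifP => // Hn.
by rewrite ltnNge leq_addl /= addnK.
Qed.

Lemma tp_master T1 T2 (f : map_st) : tree_pair T1 T2 ->
  (forall i, i < size (leaves T1) -> forall s,
     f (app (nth [::] (leaves T1) i) s) = app (nth [::] (leaves T2) i) s) ->
  tp_map T1 T2 = f.
Proof.
move=> Htp H; apply: functional_extensionality => s.
have := locate_spec T1 s 0; case: (locate T1 s 0) => i d [Hi _ Hp].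
rewrite (app_decomp Hp) tp_leaf // H //.
Qed.

Lemma tp_id T : tp_map T T = id.
Proof. by apply: tp_master. Qed.

Lemma tp_comp A B C : tree_pair A B -> tree_pair B C ->
  (fun s => tp_map B C (tp_map A B s)) = tp_map A C.
Proof.
move=> HAB HBC; symmetry; apply: tp_master; first by rewrite /tree_pair HAB.
by move=> i Hi s; rewrite tp_leaf // tp_leaf // -HAB.
Qed.

Lemma feqE f g : feq f g <-> f = g.
Proof.
split=> [H|->//]; apply: functional_extensionality => s.
by apply: functional_extensionality => n; apply: H.
Qed.

Definition ldom (a : letter) := match a with
  X0 => x0_dom | X0i => x0_rng | X1 => x1_dom | X1i => x1_rng end.
Definition lrng (a : letter) := match a with
  X0 => x0_rng | X0i => x0_dom | X1 => x1_rng | X1i => x1_dom end.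

Lemma letter_tp a : letter_map a = tp_map (ldom a) (lrng a).
Proof. by case: a. Qed.

Lemma letter_tree_pair a : tree_pair (ldom a) (lrng a).
Proof. by case: a. Qed.

Lemma linv_ldom a : ldom (linv a) = lrng a. Proof. by case: a. Qed.
Lemma linv_lrng a : lrng (linv a) = ldom a. Proof. by case: a. Qed.

Lemma letter_linv a s : letter_map a (letter_map (linv a) s) = s.
Proof.
rewrite !letter_tp linv_ldom linv_lrng.
have := tp_comp (letter_tree_pair a) _.
have Hs : tree_pair (lrng a) (ldom a) by rewrite /tree_pair (letter_tree_pair a).
move: (tp_comp Hs (letter_tree_pair a)) => E _.
by rewrite (congr1 (fun f => f s) E) tp_id.
Qed.

Lemma linvK a : linv (linv a) = a. Proof. by case: a. Qed.

Lemma letter_linv' a s : letter_map (linv a) (letter_map a s) = s.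
Proof. by rewrite -{2}(linvK a) letter_linv. Qed.

Lemma eval_cat u w s : eval (u ++ w) s = eval u (eval w s).
Proof. by elim: u => [//|a u IH] /=; rewrite IH. Qed.

Lemma eval_winv w s : eval w (eval (winv w) s) = s.
Proof.
elim: w s => [//|a w IH] s.
rewrite /winv /= rev_cons -cats1 eval_cat /= -/(winv w) IH letter_linv //.
Qed.

Lemma winvK w : winv (winv w) = w.
Proof.
by rewrite /winv map_rev revK -map_comp (eq_map (g := id)) ?map_id // => a; rewrite /= linvK.
Qed.

Lemma eval_winv' w s : eval (winv w) (eval w s) = s.
Proof. by rewrite -{2}(winvK w) eval_winv. Qed.

Lemma size_winv w : size (winv w) = size w.
Proof. by rewrite /winv size_rev size_map. Qed.

Definition F1 (bs : seq (seq bool * seq bool * seq (seq bool))) :=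
  flatten [seq [seq b.1.1 ++ x | x <- b.2] | b <- bs].
Definition F2 (bs : seq (seq bool * seq bool * seq (seq bool))) :=
  flatten [seq [seq b.1.2 ++ x | x <- b.2] | b <- bs].

Lemma size_F12 bs : size (F1 bs) = size (F2 bs).
Proof.
elim: bs => [//|b bs IH]; by rewrite /F1 /F2 /= !size_cat !size_map -/(F1 bs) -/(F2 bs) IH.
Qed.

Lemma blocks (P : seq bool -> seq bool -> Prop) bs i :
  (forall b, b \in bs -> forall x, P (b.1.1 ++ x) (b.1.2 ++ x)) ->
  i < size (F1 bs) -> P (nth [::] (F1 bs) i) (nth [::] (F2 bs) i).
Proof.
elim: bs i => [//|b bs IH] i HP.
rewrite /F1 /F2 /= -/(F1 bs) -/(F2 bs) !nth_cat !size_cat !size_map.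
case: ifP => Hi H.
  by rewrite !(nth_map [::]) //; apply: HP; rewrite mem_head.
have {}H : i - size b.2 < size (F1 bs).
  rewrite ltn_subLR; first by []. by rewrite leqNgt Hi.
by apply: IH => // c Hc; apply: HP; rewrite in_cons Hc orbT.
Qed.

Definition rotT (a : letter) (T : tree) : tree :=
  match a, T with
  | X0, Node (Node A1 A2) B => Node A1 (Node A2 B)
  | X0i, Node A (Node B1 B2) => Node (Node A B1) B2
  | X1, Node A (Node (Node C D) E) => Node A (Node C (Node D E))
  | X1i, Node A (Node C (Node D E)) => Node A (Node (Node C D) E)
  | _, _ => T
  end.

Definition valid (a : letter) (T : tree) : bool :=
  match a, T with
  | X0, Node (Node _ _) _ => true
  | X0i, Node _ (Node _ _) => true
  | X1, Node _ (Node (Node _ _) _) => true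
  | X1i, Node _ (Node _ (Node _ _)) => true
  | _, _ => false
  end.

Lemma rot_generic a T T2 Xs :
  size Xs = size (leaves (ldom a)) ->
  leaves (rotT a T) = F1 (zip (zip (leaves (ldom a)) (leaves (lrng a))) Xs) ->
  leaves T = F2 (zip (zip (leaves (ldom a)) (leaves (lrng a))) Xs) ->
  tree_pair T T2 ->
  tree_pair (rotT a T) T2 /\
  tp_map (rotT a T) T2 = (fun s => tp_map T T2 (letter_map a s)).
Proof.
set bs := zip _ Xs => HX E1 E2 Htp.
have Htp' : tree_pair (rotT a T) T2 by rewrite /tree_pair E1 size_F12 -E2.
split => //; apply: tp_master => // i Hi s.
have HLr : size (leaves (ldom a)) = size (leaves (lrng a)) := letter_tree_pair a.
have HP : forall b, b \in bs -> forall x,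
    (fun u u' => forall t, letter_map a (app u t) = app u' t) (b.1.1 ++ x) (b.1.2 ++ x).
  move=> b /(nthP ([::], [::], [::])) [k Hk <-] x t /=.
  have Hz : size (zip (leaves (ldom a)) (leaves (lrng a))) = size Xs.
    by rewrite size_zip -HLr minnn HX.
  move: Hk; rewrite /bs size_zip -Hz minnn size_zip -HLr minnn => Hk.
  rewrite nth_zip // nth_zip //= !app_cat letter_tp tp_leaf //; exact: letter_tree_pair.
have Hi' : i < size (F1 bs) by rewrite -E1.
have := @blocks (fun u u' => forall t, letter_map a (app u t) = app u' t) bs i HP Hi'.
rewrite /= -E1 -E2 => ->.
by rewrite tp_leaf // E2 -size_F12.
Qed.

Ltac leaves_tac := rewrite /F1 /F2 /= ?map_cat ?cats0 -?catA -?map_comp; reflexivity.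

Lemma rot_tp a T T2 : valid a T -> tree_pair T T2 ->
  tree_pair (rotT a T) T2 /\
  tp_map (rotT a T) T2 = (fun s => tp_map T T2 (letter_map a s)).
Proof.
case: a; case: T => // A B.
- case: A => // A1 A2 _; apply: (@rot_generic _ _ _ [:: leaves A1; leaves A2; leaves B]) => //; leaves_tac.
- case: B => // B1 B2 _; apply: (@rot_generic _ _ _ [:: leaves A; leaves B1; leaves B2]) => //; leaves_tac.
- case: B => // [[//|C D] E] _; apply: (@rot_generic _ _ _ [:: leaves A; leaves C; leaves D; leaves E]) => //; leaves_tac.
- case: B => // [C [//|D E]] _; apply: (@rot_generic _ _ _ [:: leaves A; leaves C; leaves D; leaves E]) => //; leaves_tac.
Qed.

Fixpoint expand_at (T : tree) (i : nat) : tree :=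
  match T with
  | Leaf => Node Leaf Leaf
  | Node l r => if i < size (leaves l) then Node (expand_at l i) r
                else Node l (expand_at r (i - size (leaves l)))
  end.

Lemma carets_expand T i : carets (expand_at T i) = (carets T).+1.
Proof.
elim: T i => [//|l IHl r IHr] i /=; case: ifP => _ /=; by rewrite ?IHl ?IHr ?addSn ?addnS.
Qed.

Lemma drop_cat_le T (s1 s2 : seq T) n : n <= size s1 -> drop n (s1 ++ s2) = drop n s1 ++ s2.
Proof.
move=> H; rewrite drop_cat; case: ltnP => // H2.
have -> : n = size s1 by apply/eqP; rewrite eqn_leq H H2.
by rewrite subnn drop0 drop_size.
Qed.
Lemma take_cat_le T (s1 s2 : seq T) n : n <= size s1 -> take n (s1 ++ s2) = take n s1.
Proof.
move=> H; rewrite take_cat; case: ltnP => // H2.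
have -> : n = size s1 by apply/eqP; rewrite eqn_leq H H2.
by rewrite subnn take0 cats0 take_size.
Qed.
Lemma drop_cat_ge T (s1 s2 : seq T) n : size s1 <= n -> drop n (s1 ++ s2) = drop (n - size s1) s2.
Proof. by move=> H; rewrite drop_cat ltnNge H. Qed.
Lemma take_cat_ge T (s1 s2 : seq T) n : size s1 <= n -> take n (s1 ++ s2) = s1 ++ take (n - size s1) s2.
Proof. by move=> H; rewrite take_cat ltnNge H. Qed.

Lemma leaves_expand T i : i < size (leaves T) ->
  leaves (expand_at T i) = take i (leaves T) ++
    [:: rcons (nth [::] (leaves T) i) false; rcons (nth [::] (leaves T) i) true]
    ++ drop i.+1 (leaves T).
Proof.
elim: T i => [|l IHl r IHr] i /=.
  by case: i.
rewrite size_cat !size_map => Hi.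
case: ifP => Hil /=.
  rewrite IHl // take_cat_le; last by rewrite size_map ltnW.
  rewrite drop_cat_le; last by rewrite size_map.
  rewrite nth_cat size_map Hil (nth_map [::]) // !map_cat !map_take !map_drop -!catA //.
have Hli : size (leaves l) <= i by rewrite leqNgt Hil.
have Hir : i - size (leaves l) < size (leaves r) by rewrite ltn_subLR.
rewrite IHr // take_cat_ge; last by rewrite size_map.
rewrite drop_cat_ge; last by rewrite size_map (leq_trans Hli).
rewrite nth_cat size_map Hil (nth_map [::]) // !map_cat !map_take !map_drop -!catA /=.
by rewrite subSn.
Qed.

Lemma nth_expand T i j : i < size (leaves T) -> j < (size (leaves T)).+1 ->
  nth [::] (leaves (expand_at T i)) j =
  if j < i then nth [::] (leaves T) j
  else if j == i then rcons (nth [::] (leaves T) i) false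
  else if j == i.+1 then rcons (nth [::] (leaves T) i) true
  else nth [::] (leaves T) j.-1.
Proof.
move=> Hi Hj; rewrite leaves_expand // nth_cat size_take Hi.
case: ifP => Hji; first by rewrite nth_take.
case: eqP => [->|Hne]; first by rewrite subnn.
case: eqP => [->|Hne2]; first by rewrite subSn // subnn.
have Hgt : i.+1 < j.
  rewrite ltn_neqAle eq_sym; apply/andP; split; first by apply/eqP.
  by rewrite ltn_neqAle eq_sym; apply/andP; split; [apply/eqP|rewrite leqNgt Hji].
have [k ->] : exists k, j = i.+2 + k by exists (j - i.+2); rewrite subnKC.
have -> : i.+2 + k - i = k.+2 by rewrite !addSn -!addnS addKn.
by rewrite /= nth_drop !addSn.
Qed.

Lemma size_leaves_expand T i : size (leaves (expand_at T i)) = (size (leaves T)).+1.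
Proof. by rewrite !size_leaves carets_expand. Qed.

Lemma expand_tp T1 T2 i : tree_pair T1 T2 -> i < size (leaves T1) ->
  tree_pair (expand_at T1 i) (expand_at T2 i) /\
  tp_map (expand_at T1 i) (expand_at T2 i) = tp_map T1 T2.
Proof.
move=> Htp Hi.
have Hi2 : i < size (leaves T2) by rewrite -Htp.
have Htp' : tree_pair (expand_at T1 i) (expand_at T2 i).
  by rewrite /tree_pair !size_leaves_expand Htp.
split => //; apply: tp_master => // j Hj s.
rewrite size_leaves_expand in Hj.
have Hj2 : j < (size (leaves T2)).+1 by rewrite -Htp.
rewrite !nth_expand //.
case: ifP => Hji; first by rewrite tp_leaf // (ltn_trans Hji).
case: eqP => [_|Hne]; first by rewrite -!cats1 !app_cat tp_leaf.
case: eqP => [_|Hne2]; first by rewrite -!cats1 !app_cat tp_leaf.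
apply: tp_leaf => //.
case: j Hj Hji Hne {Hj2 Hne2} => [|j] Hj Hji Hne //=.
by case: i Hi Hi2 Hji Hne {Htp'}.
Qed.

Lemma nil_leaf T i : i < size (leaves T) -> nth [::] (leaves T) i = [::] -> T = Leaf.
Proof.
case: T => // l r Hi; rewrite nth_leaves_Node //; by case: ifP.
Qed.

Lemma collapse T i : exposed T i -> exists T', T = expand_at T' i /\ i < size (leaves T').
Proof.
elim: T i => [|l IHl r IHr] i [Hs [a [Ha1 Ha2]]].
  by [].
have Hi : i < size (leaves (Node l r)) by apply: ltnW.
move: Ha1 Ha2; rewrite !nth_leaves_Node //.
case: (ltnP i.+1 (size (leaves l))) => H1.
  rewrite (ltn_trans (ltnSn i) H1).
  case: a => [|b a] /=; first by move=> _ /(congr1 (head true)).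
  move=> [<- Ha1] [Ha2].
  have [l' [El Hl']] : exists l', l = expand_at l' i /\ i < size (leaves l').
    by apply: IHl; split => //; exists a.
  exists (Node l' r); split; last by rewrite /= size_cat size_map ltn_addr.
  by rewrite /= Hl' El.
case: (ltnP i (size (leaves l))) => H2.
  have Hnl : size (leaves l) = i.+1 by apply/eqP; rewrite eqn_leq H1 H2.
  rewrite Hnl subnn.
  case: a => [|b a] /=; last first.
    by case: (nth [::] (leaves l) i) => [|? ?] /= [<-]; case: (nth [::] (leaves r) 0) => [|? ?] /=.
  case=> Ex; case=> Ey.
  have El : l = Leaf by apply: (nil_leaf H2).
  have Hr0 : 0 < size (leaves r) by rewrite size_leaves.
  have Er : r = Leaf by apply: (nil_leaf Hr0).
  have Hi0 : i = 0 by move: Hnl; rewrite El => /= [[]].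
  by subst; exists Leaf.
case: a => [|b a] /=; first by move=> /(congr1 (head false)).
move=> [<- Ha1] [Ha2].
have Hs' : (i - size (leaves l)).+1 < size (leaves r).
  rewrite -subSn // ltn_subLR; last by apply: ltnW.
  by move: Hs; rewrite /= size_cat !size_map.
have [r' [Er Hr']] : exists r', r = expand_at r' (i - size (leaves l)) /\
     i - size (leaves l) < size (leaves r').
  apply: IHr; split => //; exists a; split => //.
  by rewrite -Ha2 subSn.
exists (Node l r'); split.
  by rewrite /= ltnNge H2 /= Er.
by rewrite /= size_cat !size_map -ltn_subLR.
Qed.

Lemma exists_reduced T1 T2 : tree_pair T1 T2 ->
  exists R1 R2, [/\ tree_pair R1 R2, tp_map R1 R2 = tp_map T1 T2, reduced R1 R2
                  & carets R1 <= carets T1].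
Proof.
move: {2}(carets T1) (leqnn (carets T1)) => n; elim: n T1 T2 => [|n IH] T1 T2 Hn Htp.
  exists T1, T2; split => //.
  by move=> [i [[Hs _] _]]; move: Hs; rewrite size_leaves; case: (carets T1) Hn.
case: (classic (reduced T1 T2)) => Hr; first by exists T1, T2.
have [i [E1 E2]] : exists i, exposed T1 i /\ exposed T2 i by apply: NNPP.
have [T1' [ET1 Hi1]] := collapse E1.
have [T2' [ET2 Hi2]] := collapse E2.
have Htp' : tree_pair T1' T2'.
  move: Htp; rewrite /tree_pair ET1 ET2 !size_leaves_expand; by case.
have Hc : carets T1' <= n.
  by move: Hn; rewrite ET1 carets_expand.
have [R1 [R2 [H1 H2 H3 H4]]] := IH T1' T2' Hc Htp'.
exists R1, R2; split => //.
  by rewrite H2 ET1 ET2; case: (expand_tp Htp' Hi1).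
by rewrite ET1 carets_expand (leq_trans H4).
Qed.

Lemma exposed_exists T : T <> Leaf -> exists k c,
  [/\ k.+1 < size (leaves T),
      nth [::] (leaves T) k = rcons c false
    & nth [::] (leaves T) k.+1 = rcons c true].
Proof.
elim: T => [//|l IHl r IHr] _.
case El: l => [|l1 l2].
  case Er: r => [|r1 r2]; first by exists 0, [::].
  rewrite -Er; have [k [c [H1 H2 H3]]] : exists k c, [/\ k.+1 < size (leaves r), nth [::] (leaves r) k = rcons c false & nth [::] (leaves r) k.+1 = rcons c true] by apply: IHr; rewrite Er.
  have Hs : forall j, j < size (leaves r) -> (1 + j) < size (leaves (Node Leaf r)).
    by move=> j; rewrite !size_leaves /= add0n => Hj; rewrite add1n ltnS.
  exists (1 + k), (true :: c); split.
  - by rewrite -addnS Hs.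
  - by rewrite nth_leaves_Node ?Hs ?(ltnW H1) //= addKn H2.
  - by rewrite -addnS nth_leaves_Node ?Hs //= addKn H3.
rewrite -El; have [k [c [H1 H2 H3]]] : exists k c, [/\ k.+1 < size (leaves l), nth [::] (leaves l) k = rcons c false & nth [::] (leaves l) k.+1 = rcons c true] by apply: IHl; rewrite El.
have Hs : forall j, j < size (leaves l) -> j < size (leaves (Node l r)).
  by move=> j Hj; rewrite /= size_cat !size_map ltn_addr.
exists k, (false :: c); split.
- by rewrite Hs.
- by rewrite nth_leaves_Node ?Hs ?(ltnW H1) // H2.
- by rewrite nth_leaves_Node ?Hs // H1 H3.
Qed.

Lemma exposed_below T i p r : i < size (leaves T) ->
  nth [::] (leaves T) i = p ++ r -> r <> [::] ->
  exists k c, [/\ k.+1 < size (leaves T),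
      nth [::] (leaves T) k = rcons (p ++ c) false
    & nth [::] (leaves T) k.+1 = rcons (p ++ c) true].
Proof.
elim: T i p => [|l IHl r' IHr] i p Hi.
  by case: i Hi => // _; case: p => //= ->.
case: p => [|b p] Hn Hr.
  by have := @exposed_exists (Node l r'); apply.
move: Hn; rewrite nth_leaves_Node //.
have Hsl : forall j, j < size (leaves l) -> j < size (leaves (Node l r')).
  by move=> j Hj; rewrite /= size_cat !size_map ltn_addr.
have Hsr : forall j, j < size (leaves r') -> size (leaves l) + j < size (leaves (Node l r')).
  by move=> j Hj; rewrite /= size_cat !size_map ltn_add2l.
case: ifP => Hil [Eb Hn].
  have [k [c [H1 H2 H3]]] := IHl i p Hil Hn Hr.
  exists k, c; split; first by apply: Hsl.
    by rewrite nth_leaves_Node ?Hsl ?(ltnW H1) // H2 -Eb.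
  by rewrite nth_leaves_Node ?Hsl // H1 H3 -Eb.
have Hir : i - size (leaves l) < size (leaves r').
  rewrite ltn_subLR; last by rewrite leqNgt Hil.
  by move: Hi; rewrite /= size_cat !size_map.
have [k [c [H1 H2 H3]]] := IHr _ p Hir Hn Hr.
exists (size (leaves l) + k), c; split.
- by rewrite -addnS Hsr.
- by rewrite nth_leaves_Node ?Hsr ?(ltnW H1) // ltnNge leq_addr /= addKn H2 -Eb.
- by rewrite -addnS nth_leaves_Node ?Hsr // ltnNge leq_addr /= addKn H3 -Eb.
Qed.

Definition Pfix (g : map_st) (p : seq bool) := exists q, forall s, g (app p s) = app q s.

Lemma leaf_minimal T1 T2 i p r : tree_pair T1 T2 -> reduced T1 T2 ->
  i < size (leaves T1) -> nth [::] (leaves T1) i = p ++ r -> r <> [::] ->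
  ~ Pfix (tp_map T1 T2) p.
Proof.
move=> Htp Hred Hi Hn Hr [q Hq].
have [k [c [H1 H2 H3]]] := exposed_below Hi Hn Hr.
apply: Hred; exists k; split; first by split => //; exists (p ++ c).
split; first by rewrite -Htp.
exists (q ++ c); split; apply: app_inj => s.
  rewrite -(tp_leaf s Htp (ltnW H1)) H2 -cats1 -catA !app_cat Hq.
  by rewrite -cats1 !app_cat.
rewrite -(tp_leaf s Htp H1) H3 -cats1 -catA !app_cat Hq.
by rewrite -cats1 !app_cat.
Qed.

Lemma prefix_cmp u w s : pre_at 0 u s -> pre_at 0 w s -> size u <= size w ->
  w = u ++ drop (size u) w.
Proof.
move=> Hu Hw Hs; rewrite -{1}(cat_take_drop (size u) w); congr (_ ++ _).
apply: (@eq_from_nth _ false); first by rewrite size_takel.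
move=> k; rewrite size_takel // => Hk.
rewrite nth_take // -Hu // Hw //; exact: leq_trans Hk Hs.
Qed.

Lemma minimal_carets T1 T2 S1 S2 : tree_pair T1 T2 -> reduced T1 T2 ->
  tree_pair S1 S2 -> tp_map S1 S2 = tp_map T1 T2 -> carets T1 <= carets S1.
Proof.
move=> Htp Hred Hsp Eg.
pose z : stream := fun _ => false.
pose jf i := (locate S1 (app (nth [::] (leaves T1) i) z) 0).1.
have Hj : forall i, i < size (leaves T1) ->
    jf i < size (leaves S1) /\
    exists r, nth [::] (leaves S1) (jf i) = nth [::] (leaves T1) i ++ r.
  move=> i Hi; rewrite /jf.
  have := locate_spec S1 (app (nth [::] (leaves T1) i) z) 0.
  case: (locate _ _ _) => j d [Hjs _ Hpre] /=; split => //.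
  set u := nth [::] (leaves T1) i; set w := nth [::] (leaves S1) j.
  case: (leqP (size u) (size w)) => Hsz.
    by exists (drop (size u) w); apply: (prefix_cmp (@pre_app u z) Hpre).
  exfalso.
  have Eu := prefix_cmp Hpre (@pre_app u z) (ltnW Hsz).
  apply: (@leaf_minimal T1 T2 i w (drop (size w) u)) => //.
  + move=> Hd; have Euw : u = w by rewrite {1}Eu Hd cats0.
    by move: Hsz; rewrite Euw ltnn.
  + exists (nth [::] (leaves S2) j) => s; rewrite -Eg tp_leaf //.
have Hinj : {in iota 0 (size (leaves T1)) &, injective jf}.
  move=> i1 i2; rewrite !mem_iota !add0n => Hi1 Hi2 E.
  have [_ [r1 E1]] := Hj i1 Hi1; have [_ [r2 E2]] := Hj i2 Hi2.
  set w := nth [::] (leaves S1) (jf i1) in E1.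
  rewrite -E -/w in E2.
  pose t := app w z.
  have P1 : pre_at 0 (nth [::] (leaves T1) i1) t by rewrite /t E1 app_cat; apply: pre_app.
  have P2 : pre_at 0 (nth [::] (leaves T1) i2) t by rewrite /t E2 app_cat; apply: pre_app.
  have := locate_uniq Hi1 P1; rewrite (locate_uniq Hi2 P2); by case.
have Hsub : {subset map jf (iota 0 (size (leaves T1))) <= iota 0 (size (leaves S1))}.
  move=> j /mapP [i]; rewrite mem_iota add0n => Hi ->.
  by rewrite mem_iota add0n; case: (Hj i Hi).
have Hu : uniq (map jf (iota 0 (size (leaves T1)))) by rewrite (map_inj_in_uniq Hinj) iota_uniq.
have := uniq_leq_size Hu Hsub.
by rewrite size_map !size_iota !size_leaves.
Qed.

Definition Pdiag (g : map_st) (P : tree * tree) :=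
  tree_pair P.1 P.2 /\ tp_map P.1 P.2 = g.

Definition e_root (P : tree * tree) := match P.1 with
  | Leaf => (Node Leaf Leaf, expand_at P.2 0) | _ => P end.
Definition e_L (P : tree * tree) := match P.1 with
  | Node Leaf B => (Node (Node Leaf Leaf) B, expand_at P.2 0) | _ => P end.
Definition e_R (P : tree * tree) := match P.1 with
  | Node A Leaf => (Node A (Node Leaf Leaf), expand_at P.2 (size (leaves A))) | _ => P end.
Definition e_RL (P : tree * tree) := match P.1 with
  | Node A (Node Leaf E) => (Node A (Node (Node Leaf Leaf) E), expand_at P.2 (size (leaves A)))
  | _ => P end.
Definition e_RR (P : tree * tree) := match P.1 with
  | Node A (Node C Leaf) => (Node A (Node C (Node Leaf Leaf)),
                             expand_at P.2 (size (leaves A) + size (leaves C)))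
  | _ => P end.

Lemma exp_ok g T1 T2 i T1' : Pdiag g (T1, T2) -> i < size (leaves T1) ->
  expand_at T1 i = T1' -> Pdiag g (T1', expand_at T2 i).
Proof.
move=> [Htp Hm] Hi <-; have [H1 H2] := expand_tp Htp Hi; split => //=.
by rewrite H2.
Qed.

Lemma sizeA A B : size (leaves A) < size (leaves (Node A B)).
Proof. by rewrite /= size_cat !size_map -addn1 leq_add2l size_leaves. Qed.

Lemma expR A B : expand_at (Node A B) (size (leaves A)) = Node A (expand_at B 0).
Proof. by rewrite /= ltnn subnn. Qed.

Lemma e_root_ok g P : Pdiag g P -> Pdiag g (e_root P).
Proof. case: P => [[|A B] T2] H //=; exact: exp_ok H _ _. Qed.
Lemma e_L_ok g P : Pdiag g P -> Pdiag g (e_L P).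
Proof. case: P => [[|[|A1 A2] B] T2] H //=; exact: exp_ok H _ _. Qed.
Lemma e_R_ok g P : Pdiag g P -> Pdiag g (e_R P).
Proof. case: P => [[|A [|B1 B2]] T2] H //=; apply: exp_ok H (sizeA _ _) _; exact: expR. Qed.
Lemma e_RL_ok g P : Pdiag g P -> Pdiag g (e_RL P).
Proof. case: P => [[|A [|[|C D] E]] T2] H //=; apply: exp_ok H (sizeA _ _) _; by rewrite expR. Qed.
Lemma e_RR_ok g P : Pdiag g P -> Pdiag g (e_RR P).
Proof.
case: P => [[|A [|C [|D E]]] T2] H //=; apply: exp_ok H _ _.
  by rewrite /= size_cat !size_map size_cat size_map /= addn1 ltn_add2l.
by rewrite /= ltnNge leq_addr /= addKn ltnn.
Qed.

Definition prep (a : letter) (P : tree * tree) := match a with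
  | X0 => e_L (e_root P) | X0i => e_R (e_root P)
  | X1 => e_RL (e_R (e_root P)) | X1i => e_RR (e_R (e_root P)) end.

Definition step (a : letter) (P : tree * tree) :=
  let Q := prep a P in (rotT a Q.1, Q.2).

Lemma valid_prep a T1 T2 : valid a (prep a (T1, T2)).1.
Proof.
case: a; case: T1 => [|A B] //=.
- by case: A.
- by case: B.
- by case: B => [|[|C D] E].
- by case: B => [|C [|D E]].
Qed.

Lemma prep_ok a g P : Pdiag g P -> Pdiag g (prep a P).
Proof.
move=> H; case: a => /=.
- exact/e_L_ok/e_root_ok.
- exact/e_R_ok/e_root_ok.
- exact/e_RL_ok/e_R_ok/e_root_ok.
- exact/e_RR_ok/e_R_ok/e_root_ok.
Qed.

Lemma step_ok a g P : Pdiag g P -> Pdiag (fun s => g (letter_map a s)) (step a P).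
Proof.
move=> H; have [Htp Hm] := prep_ok a H.
case: P H Htp Hm => T1 T2 H Htp Hm.
have [H1 H2] := rot_tp (valid_prep a T1 T2) Htp.
by split => //=; rewrite H2 Hm.
Qed.

Definition D (T : tree) := match T with Leaf => 2 | Node _ Leaf => 1 | _ => 0 end.

Lemma step_pot a P : carets (step a P).1 + D (step a P).1 <= carets P.1 + D P.1 + 1.
Proof.
case: P => T1 T2; case: a; case: T1 => [|A B] /=; try lia.
- case: A => [|A1 A2] /=; case: B => [|B1 B2] /=; lia.
- case: B => [|B1 B2] /=; try lia; case: B2 => /=; lia.
- case: B => [|[|C D'] E] /=; try lia; case: E => /=; lia.
- case: B => [|C [|D' E]] /=; lia.
Qed.

Fixpoint steps (P : tree * tree) (w : word) : tree * tree :=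
  match w with [::] => P | a :: w => steps (step a P) w end.

Lemma steps_ok w g P : Pdiag g P -> Pdiag (fun s => g (eval w s)) (steps P w).
Proof.
elim: w g P => [|a w IH] g P H /=; first by case: P H.
exact: (IH _ _ (step_ok a H)).
Qed.

Lemma steps_pot w P : carets (steps P w).1 + D (steps P w).1 <= carets P.1 + D P.1 + size w.
Proof.
elim: w P => [|a w IH] P /=; first by rewrite addn0.
by apply: leq_trans (IH _) _; have := step_pot a P; lia.
Qed.

Fixpoint reach (T : tree) (w : word) (T' : tree) : Prop :=
  match w with [::] => T = T' | a :: w => valid a T /\ reach (rotT a T) w T' end.

Lemma reach_tp w T T' V : reach T w T' -> tree_pair T V ->
  tree_pair T' V /\ tp_map T' V = (fun s => tp_map T V (eval w s)).
Proof.
elim: w T => [|a w IH] T /=; first by move=> <- H; split.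
move=> [Hv Hr] Htp; have [H1 H2] := rot_tp Hv Htp.
have [H3 H4] := IH _ Hr H1; split => //; by rewrite H4 H2.
Qed.

Fixpoint LC n := match n with 0 => Leaf | n.+1 => Node (LC n) Leaf end.
Fixpoint spine T := match T with Leaf => 0 | Node _ r => (spine r).+1 end.

Lemma spine_le T : spine T <= carets T.
Proof. elim: T => [//|l _ r IH] /=; lia. Qed.

Lemma phase2 m B k : 2 * carets B - spine B <= m ->
  exists w, reach (Node (LC k) B) w (LC (k + carets B).+1) /\ size w + spine B <= 2 * carets B.
Proof.
elim: m B k => [|m IH] B k.
  case: B => [|B1 B2] /=; first by exists [::]; rewrite addn0.
  move=> Hm; exfalso; have := spine_le B2; lia.
case: B => [|[|C D'] E] Hm /=; first by exists [::]; rewrite addn0.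
  have := spine_le E => Hs.
  have [w [Hr Hw]] := IH E k.+1 ltac:(simpl in *; lia).
  exists (X0i :: w); split; last by move: Hw => /=; lia.
  by split => //=; move: Hr => /=; rewrite add0n addnS.
have := spine_le E => Hs.
have [w [Hr Hw]] := IH (Node C (Node D' E)) k ltac:(simpl in *; lia).
exists (X1 :: w); split; last by move: Hw => /=; lia.
split => //=; move: Hr => /=.
by have -> : (carets C + (carets D' + carets E).+1).+1 = ((carets C + carets D').+1 + carets E).+1 by lia.
Qed.

Lemma phase1 A B : exists w, reach (Node A B) w (LC (carets A + carets B).+1) /\
  size w + spine B <= 2 * carets A + 2 * carets B.
Proof.
elim: A B => [|A1 IH1 A2 _] B.
  have [w [H1 H2]] := @phase2 _ B 0 (leqnn _).
  by exists w; split; rewrite /= ?add0n.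
have [w [H1 H2]] := IH1 (Node A2 B).
exists (X0 :: w); split.
  split => //; move: H1 => /=.
  by rewrite addnS -addnA.
by move: H2 => /=; lia.
Qed.

Lemma to_LC T : exists w, reach T w (LC (carets T)) /\ size w <= 2 * carets T.
Proof.
case: T => [|A B]; first by exists [::].
have [w [H1 H2]] := phase1 A B; exists w; split => //=; lia.
Qed.

Lemma size_leaves_LC n : size (leaves (LC n)) = n.+1.
Proof. by rewrite size_leaves; congr S; elim: n => //= n ->; rewrite addn0. Qed.

Lemma word_of_diag T1 T2 : tree_pair T1 T2 ->
  exists w, eval w = tp_map T1 T2 /\ size w <= 4 * carets T1.
Proof.
move=> Htp.
have Hc : carets T2 = carets T1 by move: Htp; rewrite /tree_pair !size_leaves => -[].
set n := carets T1.
have [w1 [R1 S1]] := to_LC T1; have [w2 [R2 S2]] := to_LC T2.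
rewrite Hc -/n in R2 S2.
have HT2 : tree_pair T2 (LC n) by rewrite /tree_pair size_leaves_LC size_leaves Hc.
have [_ E2] := reach_tp R2 HT2.
have [HL E1] := reach_tp R1 Htp.
have HL2 : tree_pair (LC n) T2 by rewrite /tree_pair size_leaves_LC size_leaves Hc.
have Etp : tp_map (LC n) T2 = eval w2.
  apply: functional_extensionality => s.
  have Hs : tp_map T2 (LC n) (eval w2 s) = s by have := congr1 (fun f => f s) E2; rewrite tp_id.
  by rewrite -{1}Hs (congr1 (fun f => f (eval w2 s)) (tp_comp HT2 HL2)) tp_id.
exists (w2 ++ winv w1); split; last by rewrite size_cat size_winv; lia.
apply: functional_extensionality => s.
rewrite eval_cat -Etp E1 eval_winv //.
Qed.

Lemma Pdiag_leaf : Pdiag id (Leaf, Leaf).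
Proof. by split => //=; rewrite tp_id. Qed.

Lemma diag_of_word w : Pdiag (eval w) (steps (Leaf, Leaf) w).
Proof. exact: (steps_ok w Pdiag_leaf). Qed.

Lemma Ncar_spec w : Ncarets (eval w) (Ncar (eval w)).
Proof.
apply: epsilon_spec.
have [H1 H2] := diag_of_word w.
have [R1 [R2 [H3 H4 H5 H6]]] := exists_reduced H1.
by exists (carets R1), R1, R2; split => //; apply/feqE; rewrite H4 H2.
Qed.

Lemma Ncar_diag w : exists T1 T2,
  [/\ tree_pair T1 T2, tp_map T1 T2 = eval w & carets T1 = Ncar (eval w)].
Proof.
have [T1 [T2 [H1 H2 H3 H4]]] := Ncar_spec w.
by exists T1, T2; split => //; apply/feqE.
Qed.

Lemma Ncar_le w S1 S2 : tree_pair S1 S2 -> tp_map S1 S2 = eval w ->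
  Ncar (eval w) <= carets S1.
Proof.
move=> Hs Es; have [T1 [T2 [H1 H2 H3 H4]]] := Ncar_spec w.
rewrite -H4; apply: (minimal_carets H1 H3 Hs); rewrite Es; symmetry; exact/feqE.
Qed.

Lemma lev_exists g : (exists w, feq (eval w) g) -> exists n, is_word_length g n.
Proof.
move=> [w Hw].
suff : forall n w, size w <= n -> feq (eval w) g -> exists m, is_word_length g m.
  by move/(_ (size w) w (leqnn _) Hw).
elim=> [|n IH] w' Hs Hw'.
  exists 0; split; first by exists w'; split => //; apply/eqP; rewrite -leqn0.
  by [].
case: (classic (exists w'', feq (eval w'') g /\ size w'' < size w')) => [[w'' [H1 H2]]|H].
  apply: (IH w'') => //; exact: leq_trans H2 Hs.
exists (size w'); split; first by exists w'.
move=> u Hu; rewrite leqNgt; apply/negP => Hlt; apply: H; by exists u.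
Qed.

Lemma lev_spec w : is_word_length (eval w) (lev (eval w)).
Proof. apply: epsilon_spec; apply: lev_exists; by exists w. Qed.

Lemma lev_le w u : eval u = eval w -> lev (eval w) <= size u.
Proof. move=> E; have [_ H] := lev_spec w; apply: H; exact/feqE. Qed.

Lemma lev_word w : exists u, size u = lev (eval w) /\ eval u = eval w.
Proof. have [[u [H1 H2]] _] := lev_spec w; exists u; split => //; exact/feqE. Qed.

Lemma D_le T : D T <= 2. Proof. by case: T => // ? []. Qed.

Lemma B1 w : Ncar (eval w) <= lev (eval w) + 2.
Proof.
have [u [Hs Hu]] := lev_word w.
have [H1 H2] := diag_of_word u.
have := Ncar_le H1 (etrans H2 Hu).
have := steps_pot u (Leaf, Leaf); rewrite /= -Hs; lia.
Qed.

Lemma B2 w : lev (eval w) <= 4 * Ncar (eval w).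
Proof.
have [T1 [T2 [H1 H2 H3]]] := Ncar_diag w.
have [u [Hu Hs]] := word_of_diag H1.
rewrite -H3; apply: leq_trans (lev_le (etrans Hu H2)) Hs.
Qed.

Lemma B3 w u : Ncar (eval (w ++ u)) <= Ncar (eval w) + size u + 2.
Proof.
have [T1 [T2 [H1 H2 H3]]] := Ncar_diag w.
have [H4 H5] := steps_ok u (conj H1 H2 : Pdiag (eval w) (T1, T2)).
have E : tp_map (steps (T1, T2) u).1 (steps (T1, T2) u).2 = eval (w ++ u).
  by rewrite H5; apply: functional_extensionality => s; rewrite eval_cat.
have := Ncar_le H4 E; have := steps_pot u (T1, T2); have := D_le T1.
rewrite /= H3; lia.
Qed.

Lemma closed_word w : (steps (Leaf, Leaf) w).1 = (steps (Leaf, Leaf) w).2 -> eval w = id.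
Proof.
move=> E; have [_ H2] := diag_of_word w.
by rewrite -H2 E tp_id.
Qed.

Lemma rel_id j : eval (rel_of j) = id.
Proof.
apply: closed_word.
case: j => [[|[|j]]] Hj //; vm_compute; reflexivity.
Qed.

Lemma bigmax_le_seq (s : seq nat) (F : nat -> nat) m :
  (forall i, i \in s -> F i <= m) -> \max_(i <- s) F i <= m.
Proof.
elim: s => [|a s IH] H; first by rewrite big_nil.
rewrite big_cons geq_max H ?mem_head //=; apply: IH => i Hi; apply: H; by rewrite in_cons Hi orbT.
Qed.

Lemma le_bigmax_seq (s : seq nat) (F : nat -> nat) i :
  i \in s -> F i <= \max_(j <- s) F j.
Proof.
elim: s => [//|a s IH]; rewrite in_cons big_cons => /orP [/eqP ->|Hi].
  by rewrite leq_maxl.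
by rewrite (leq_trans (IH Hi)) // leq_maxr.
Qed.

Lemma bigmin_le_seq (s : seq nat) (F : nat -> nat) x0 i :
  i \in s -> \big[minn/x0]_(j <- s) F j <= F i.
Proof.
elim: s => [//|a s IH]; rewrite in_cons big_cons => /orP [/eqP ->|Hi].
  by rewrite geq_minl.
by rewrite (leq_trans _ (IH Hi)) // geq_minr.
Qed.

Lemma bigmin_attained (s : seq nat) (F : nat -> nat) x0 :
  \big[minn/x0]_(j <- s) F j = x0 \/ exists2 i, i \in s & \big[minn/x0]_(j <- s) F j = F i.
Proof.
elim: s => [|a s IH]; first by left; rewrite big_nil.
rewrite big_cons; case: IH => [->|[i Hi ->]].
  case: (leqP (F a) x0) => H; last by left.
  by right; exists a; rewrite ?mem_head.
right; case: (leqP (F a) (F i)) => H.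
  by exists a; rewrite ?mem_head.
by exists i; rewrite ?in_cons ?Hi ?orbT.
Qed.

Lemma sum_const_seq (s : seq nat) c : \sum_(i <- s) c = size s * c.
Proof. elim: s => [|a s IH]; by rewrite ?big_nil ?big_cons ?IH ?mulSn. Qed.

Lemma sum_le_seq (s : seq nat) (F G : nat -> nat) :
  (forall i, i \in s -> F i <= G i) -> \sum_(i <- s) F i <= \sum_(i <- s) G i.
Proof.
elim: s => [|a s IH] H; first by rewrite !big_nil.
rewrite !big_cons leq_add ?H ?mem_head //; apply: IH => i Hi; apply: H; by rewrite in_cons Hi orbT.
Qed.

Lemma B3' v w u : eval v = eval (w ++ u) -> Ncar (eval v) <= Ncar (eval w) + size u + 2.
Proof. by move=> ->; apply: B3. Qed.

Lemma evalE u v : (forall s, eval u s = eval v s) -> eval u = eval v.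
Proof. by move=> H; apply: functional_extensionality. Qed.

Lemma cell_pair w r i j : eval r = id -> size r <= 14 -> i < size r -> j < size r ->
  Ncar (eval (w ++ take j r)) <= Ncar (eval (w ++ take i r)) + 9.
Proof.
move=> Hr Hn Hi Hj.
have Er : forall s, eval r s = s by move=> s; rewrite Hr.
case: (leqP i j) => Hij.
  have Ea : eval (w ++ take j r) = eval ((w ++ take i r) ++ drop i (take j r)).
    by rewrite -catA -{1}(cat_take_drop i (take j r)) take_takel.
  have Eb : eval (w ++ take j r) = eval ((w ++ take i r) ++ (winv (take i r) ++ winv (drop j r))).
    apply: evalE => s; rewrite !eval_cat eval_winv; congr (eval w _).
    rewrite -{1}(eval_winv (drop j r) s) -eval_cat cat_take_drop Er //.
  have := B3' Ea; have := B3' Eb.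
  rewrite size_drop size_take ?Hj !size_cat !size_winv size_drop size_take Hi; lia.
have Ec : eval (w ++ take j r) = eval ((w ++ take i r) ++ winv (drop j (take i r))).
  apply: evalE => s; rewrite !eval_cat; congr (eval w _).
  set t := take i r.
  have Et : t = take j r ++ drop j t by rewrite -{1}(cat_take_drop j t) /t take_takel // ltnW.
  by rewrite {1}Et eval_cat eval_winv.
have Ed : eval (w ++ take j r) = eval ((w ++ take i r) ++ (drop i r ++ take j r)).
  apply: evalE => s; rewrite !eval_cat; congr (eval w _).
  by rewrite -eval_cat cat_take_drop Er.
have := B3' Ec; have := B3' Ed.
rewrite !size_cat !size_winv !size_drop !size_take ?Hi ?Hj; lia.
Qed.

Lemma cell_facts w r : eval r = id -> 0 < size r <= 14 ->
  let vs := cell_vertices w r in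
  let Mx := \max_(g <- vs) Ncar g in
  let Mn := \big[minn/Ncar (head id vs)]_(g <- vs) Ncar g in
  let S := \sum_(g <- vs) lev g in
  [/\ size r * Mn <= S + 2 * size r, S <= size r * (4 * Mx) & Mx <= Mn + 9].
Proof.
move=> Hr /andP [Hn0 Hn14] vs Mx Mn S.
pose f i := eval (w ++ take i r).
have EMx : Mx = \max_(i <- iota 0 (size r)) Ncar (f i) by rewrite /Mx /vs /cell_vertices big_map.
have ES : S = \sum_(i <- iota 0 (size r)) lev (f i) by rewrite /S /vs /cell_vertices big_map.
have Hhead : head id vs = f 0 by rewrite /vs /cell_vertices; case: (size r) Hn0.
have EMn : Mn = \big[minn/Ncar (f 0)]_(i <- iota 0 (size r)) Ncar (f i).
  by rewrite /Mn Hhead /vs /cell_vertices big_map.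
have Hmn_le : forall i, i < size r -> Mn <= Ncar (f i).
  by move=> i Hi; rewrite EMn; apply: bigmin_le_seq; rewrite mem_iota.
have [i0 Hi0 EMn0] : exists2 i0, i0 < size r & Mn = Ncar (f i0).
  case: (bigmin_attained (iota 0 (size r)) (fun i => Ncar (f i)) (Ncar (f 0))).
    by rewrite -EMn => ->; exists 0.
  by move=> [i]; rewrite mem_iota add0n -EMn => Hi ->; exists i.
split.
- rewrite ES; have := @sum_le_seq (iota 0 (size r)) (fun _ => Mn) (fun i => lev (f i) + 2).
  rewrite sum_const_seq size_iota big_split /= sum_const_seq size_iota (mulnC 2); apply.
  move=> i; rewrite mem_iota add0n => Hi; exact: leq_trans (Hmn_le i Hi) (B1 _).
- rewrite ES; have := @sum_le_seq (iota 0 (size r)) (fun i => lev (f i)) (fun _ => 4 * Mx).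
  rewrite sum_const_seq size_iota; apply.
  move=> i; rewrite mem_iota add0n => Hi; apply: leq_trans (B2 _) _.
  by rewrite leq_mul2l /= EMx; apply: (le_bigmax_seq (fun i => Ncar (f i))); rewrite mem_iota.
- rewrite EMx EMn0; apply: bigmax_le_seq => i; rewrite mem_iota add0n => Hi.
  exact: cell_pair.
Qed.

Local Open Scope ring_scope.

Lemma natle {a b : nat} : (a <= b)%N -> (a%:R <= b%:R :> rat).
Proof. by rewrite ler_nat. Qed.

Theorem lemma5p3 (x : point) :
  [/\ (Nmin x)%:R - 2%:R <= levp x,
      levp x < 4%:R * (Nmax x)%:R + 1
    & (Nmax x - Nmin x <= 9)%N].
Proof.
case: x => [w|w a|w j].
- rewrite /Nmin /Nmax /levp /= !big_cons !big_nil maxn0 minnn.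
  have H1 := natle (B1 w); have H2 := natle (B2 w).
  rewrite natrD in H1; rewrite natrM in H2.
  split; [lra|lra|by rewrite subnn].
- rewrite /Nmin /Nmax /levp /= !big_cons !big_nil maxn0.
  set N0 := Ncar (eval w); set N1 := Ncar (eval (w ++ [:: a])).
  set L0 := lev (eval w); set L1 := lev (eval (w ++ [:: a])).
  have h01 : (N1 <= N0 + 3)%N by have := B3 w [:: a]; rewrite /=; lia.
  have h10 : (N0 <= N1 + 3)%N.
    have E : eval w = eval ((w ++ [:: a]) ++ [:: linv a]).
      by apply: functional_extensionality => s; rewrite !eval_cat /= letter_linv.
    by have := B3' E; rewrite /=; lia.
  have a1 := natle (B1 w); have a2 := natle (B1 (w ++ [:: a])).
  have a3 := natle (B2 w); have a4 := natle (B2 (w ++ [:: a])).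
  have m0 := natle (geq_minl N0 (minn N1 N0)).
  have m1 := natle (leq_trans (geq_minr N0 (minn N1 N0)) (geq_minl N1 N0)).
  have M0 := natle (leq_maxl N0 N1); have M1 := natle (leq_maxr N0 N1).
  rewrite natrD in a1; rewrite natrD in a2; rewrite natrM in a3; rewrite natrM in a4.
  split; [lra|lra|lia].
- have Hsz : (0 < size (rel_of j) <= 14)%N by case: j => [[|[|j]] Hj].
  have Hr := rel_id j.
  have [c1 c2 c3] := cell_facts w Hr Hsz.
  rewrite /Nmin /Nmax /levp.
  change (pt_vertices (PCell w j)) with (cell_vertices w (rel_of j)).
  rewrite -natr_sum.
  set Mx := \max_(g <- cell_vertices w (rel_of j)) Ncar g in c2 c3 *.
  set Mn := \big[minn/Ncar (head id (cell_vertices w (rel_of j)))]_(g <- cell_vertices w (rel_of j)) Ncar g in c1 c3 *.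
  set S := \sum_(g <- cell_vertices w (rel_of j)) lev g in c1 c2 *.
  have Hn : size (rel_of j) = 10%N \/ size (rel_of j) = 14%N by clear; case: j => [[|[|j]] Hj]; [left|right|].
  have d1 := natle c1; have d2 := natle c2.
  rewrite natrD !natrM in d1; rewrite !natrM in d2.
  split; last by lia.
  + case: Hn => E; rewrite E in d1 *; rewrite (_ : cconst = 561%N) //; lra.
  + case: Hn => E; rewrite E in d2 *; rewrite (_ : cconst = 561%N) //; lra.
Qed.
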